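(* Let $D$ be a knot diagram that is ascending from a base point $b$, and regard $D$ as a $(1,1)$-tangle diagram by moving $b$ to infinity via a planar isotopy of $S^2$. Then a Reidemeister I, II, or III move can be applied to every bounded $1$-, $2$-, or $3$-sided face of $D$, respectively.
   Context: An oriented knot diagram is ascending from a point $b$ (not a crossing) if, travelling along the knot from $b$ in the direction of the orientation, every crossing is first met along its under-strand and later along its over-strand. A $2$-sided face admits a Reidemeister II move when one of its edges is the over-strand at both its crossings; a $3$-sided face admits a Reidemeister III move when one of its edges is the over-strand at both of its crossings. *)

(* Defs.v *)
From mathcomp Require Import all_boot.
Set Implicit Arguments. Unset Strict Implicit. Unset Printing Implicit Defensive.

(* A knot diagram with n crossings is encoded by its N = 2n "passages":
   travelling along the knot from the base point b (which lies on an edge,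
   not at a crossing) we meet the passages 0, 1, ..., N-1 in this order.
   - [kd_partner p] is the other passage through the same crossing;
   - [kd_over p] says the strand is the over-strand at passage p;
   - [kd_sign p] records the planar local picture at the crossing of p:
     going counterclockwise around that crossing, the half-edge leaving along
     passage p is followed by the half-edge leaving along the partner passage
     (true) or by the half-edge arriving along the partner passage (false).
   Edge i runs from passage i to passage i+1 (mod N); the base point b lies on
   edge N-1 (from passage N-1 to passage 0).  Darts (half-edges) are pairs
   (i, false) = tail of edge i, (i, true) = head of edge i.
   Faces are the orbits of the face permutation [kd_phi] = sigma o alpha of
   the resulting rotation system; planarity (embedding in S^2) is expressed
   by Euler's formula: #faces = #crossings + 2. *)

Definition dart N := ('I_N * bool)%type.

Definition outd N (p : 'I_N) : dart N := (p, false).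
Definition ind N (p : 'I_N) : dart N := (ord_pred p, true).
Definition dart_passage N (d : dart N) : 'I_N :=
  if d.2 then ordS d.1 else d.1.

Record knot_diagram (N : nat) := KnotDiagram {
  kd_partner : 'I_N -> 'I_N;
  kd_over : 'I_N -> bool;
  kd_sign : 'I_N -> bool;
  kd_partner_invol : involutive kd_partner;
  kd_partner_neq : forall p, kd_partner p != p;
  kd_over_partner : forall p, kd_over (kd_partner p) = ~~ kd_over p;
  kd_sign_partner : forall p, kd_sign (kd_partner p) = ~~ kd_sign p
}.

Section KD.
Variables (N : nat) (D : knot_diagram N).

Definition kd_alpha (d : dart N) : dart N := (d.1, ~~ d.2).

(* rotation sigma: next half-edge counterclockwise around the crossing *)
Definition kd_sigma (d : dart N) : dart N :=
  let p := dart_passage d in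
  let q := kd_partner D p in
  if ~~ d.2 then (if kd_sign D p then outd q else ind q)
  else (if kd_sign D p then ind q else outd q).

Definition kd_phi (d : dart N) : dart N := kd_sigma (kd_alpha d).

(* the diagram is planar (lives on S^2): Euler's formula V - E + F = 2
   with V = N/2 crossings and E = N edges *)
Definition kd_planar : Prop :=
  fcard kd_phi (predT : pred (dart N)) = N./2 + 2.

(* ascending from b: each crossing is met first as under, later as over *)
Definition ascending : Prop :=
  forall p : 'I_N, kd_over D p = (kd_partner D p < p)%N.

Definition base_edge (i : 'I_N) : bool := (i.+1 == N)%N.

(* the face of dart d, viewed in the (1,1)-tangle obtained by sending b to
   infinity, is bounded iff its boundary does not contain the edge of b *)
Definition bounded_face (d : dart N) : bool :=
  [forall d' : dart N, fconnect kd_phi d d' ==> ~~ base_edge d'.1].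

Definition face_sides (d : dart N) : nat := order kd_phi d.

Definition over_both (i : 'I_N) : bool := kd_over D i && kd_over D (ordS i).

(* Reidemeister I: the single edge of the 1-sided face is a loop starting and
   ending at the same crossing *)
Definition admits_R1 (d : dart N) : Prop :=
  kd_partner D d.1 = ordS d.1.

Definition admits_R2 (d : dart N) : Prop :=
  exists2 d', fconnect kd_phi d d' & over_both d'.1.
Definition admits_R3 (d : dart N) : Prop :=
  exists2 d', fconnect kd_phi d d' & over_both d'.1.

End KD.

(* Main.v *)
Require Import Defs.
From mathcomp Require Import all_boot.
From mathcomp Require Import zify.

Section Aux.
Variables (N : nat) (D : knot_diagram N).

Lemma sigma_outd (p : 'I_N) : kd_sigma D (outd p) =
  if kd_sign D p then outd (kd_partner D p) else ind (kd_partner D p).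
Proof. by []. Qed.

Lemma sigma_ind (p : 'I_N) : kd_sigma D (ind p) =
  if kd_sign D p then ind (kd_partner D p) else outd (kd_partner D p).
Proof. by rewrite /kd_sigma /dart_passage /= ord_predK. Qed.

Lemma dart_cases (d : dart N) : d = if d.2 then ind (ordS d.1) else outd d.1.
Proof. by case: d => i [] //=; rewrite /ind ordSK. Qed.

Lemma sigma4 d : kd_sigma D (kd_sigma D (kd_sigma D (kd_sigma D d))) = d.
Proof.
case: d => i [].
  have -> : (i, true) = ind (ordS i) by rewrite /ind ordSK.
  move: (ordS i) => p.
  by case sp: (kd_sign D p);
  do 4 (rewrite ?sigma_outd ?sigma_ind ?kd_sign_partner ?kd_partner_invol ?sp /=).
have -> : (i, false) = outd i by [].
move: i => p.
by case sp: (kd_sign D p);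
  do 4 (rewrite ?sigma_outd ?sigma_ind ?kd_sign_partner ?kd_partner_invol ?sp /=).
Qed.

Lemma sigma_inj : injective (kd_sigma D).
Proof.
apply: (can_inj (g := fun d => kd_sigma D (kd_sigma D (kd_sigma D d)))).
exact: sigma4.
Qed.

Lemma phi_inj : injective (kd_phi D).
Proof.
move=> x y /sigma_inj [] h1 h2; case: x h1 h2 => ? [] ; case: y => ? [] //= -> //.
Qed.

Definition sp (d : dart N) : 'I_N := dart_passage d.
Definition ep (d : dart N) : 'I_N := dart_passage (kd_alpha d).

Lemma dp_ind (p : 'I_N) : dart_passage (ind p) = p.
Proof. exact: ord_predK. Qed.

Lemma passage_phi d : sp (kd_phi D d) = kd_partner D (ep d).
Proof.
rewrite /sp /ep /kd_phi /kd_alpha.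
case: d => i [] /=.
  have -> : (i, false) = outd i by [].
  by rewrite sigma_outd; case: (kd_sign D i); rewrite ?dp_ind.
have -> : (i, true) = ind (ordS i) by rewrite /ind ordSK.
by rewrite sigma_ind; case: (kd_sign D _); rewrite ?dp_ind.
Qed.

Lemma ordS_val (i : 'I_N) : i.+1 < N -> val (ordS i) = i.+1.
Proof. by move=> h; rewrite /= modn_small. Qed.

Lemma sp_ep (d : dart N) : d.1.+1 < N ->
  (val (sp d) = d.1 /\ val (ep d) = d.1.+1 /\ d.2 = false) \/
  (val (sp d) = d.1.+1 /\ val (ep d) = d.1 /\ d.2 = true).
Proof.
move=> h; rewrite /sp /ep /dart_passage /=; case: d h => i [] /= h;
  rewrite modn_small //; by [right | left].
Qed.

Lemma dart_eq (d d' : dart N) : d.1.+1 < N -> d'.1.+1 < N ->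
  val (sp d) = val (sp d') -> val (ep d) = val (ep d') -> d = d'.
Proof.
case: d => i x; case: d' => j y /= h h'.
case: (@sp_ep (i, x) h) => /= [[a [b c]]|[a [b c]]];
  case: (@sp_ep (j, y) h') => /= [[a' [b' c']]|[a' [b' c']]] => e1 e2;
  subst; rewrite a b a' b' in e1 e2; try (exfalso; lia); congr pair; apply: val_inj => /=; lia.
Qed.

Lemma over_both_sp (d : dart N) : over_both D d.1 = kd_over D (sp d) && kd_over D (ep d).
Proof. by rewrite /over_both /sp /ep /dart_passage; case: d => i [] /=; rewrite andbC. Qed.

Lemma ob (c p : dart N) : ascending D -> c = kd_phi D p ->
  over_both D c.1 = (val (ep p) < val (sp c)) && (val (sp (kd_phi D c)) < val (ep c)).
Proof.
move=> asc ->; rewrite over_both_sp !asc !passage_phi kd_partner_invol.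
by rewrite -passage_phi.
Qed.

Lemma nxt_neq (c : dart N) : val (sp (kd_phi D c)) <> val (ep c).
Proof.
move=> /val_inj; rewrite passage_phi => e.
by move: (kd_partner_neq D (ep c)); rewrite e eqxx.
Qed.

Lemma adj (c : dart N) : c.1.+1 < N ->
  val (ep c) = (val (sp c)).+1 \/ val (sp c) = (val (ep c)).+1.
Proof. by move=> h; case: (@sp_ep c h) => [[-> [-> _]]|[-> [-> _]]]; [left|right]. Qed.

Lemma dneq (c c' : dart N) : c.1.+1 < N -> c'.1.+1 < N -> c != c' ->
  ~ (val (sp c) = val (sp c') /\ val (ep c) = val (ep c')).
Proof. by move=> h h' /eqP ne [e1 e2]; apply: ne; by apply: (@dart_eq c c'). Qed.

End Aux.

Theorem lemma5p7 (N : nat) (D : knot_diagram N) :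
  kd_planar D -> ascending D ->
  forall d : dart N, bounded_face D d ->
    [/\ face_sides D d = 1 -> admits_R1 D d,
        face_sides D d = 2 -> admits_R2 D d &
        face_sides D d = 3 -> admits_R3 D d].
Proof.
move=> _ asc d bd.
have bnd : forall n, (iter n (kd_phi D) d).1.+1 < N.
  move=> n; move/forallP: bd => /(_ (iter n (kd_phi D) d)).
  rewrite fconnect_iter /= /base_edge => ne.
  have := ltn_ord (iter n (kd_phi D) d).1; rewrite leq_eqVlt (negbTE ne) //.
have cyc := iter_order (@phi_inj N D) d.
have uq := orbit_uniq (kd_phi D) d.
rewrite /face_sides; split => ord.
- move: cyc; rewrite ord /= /admits_R1.
  case: d {bd bnd uq ord} => i [] /= => /(f_equal (@sp N)); rewrite passage_phi /sp /ep /= => e.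
    exact: e.
  by rewrite /dart_passage /= in e; rewrite -[in LHS]e kd_partner_invol.
- move: cyc uq; rewrite /orbit ord /= andbT inE => cyc ne.
  set d1 := kd_phi D d in cyc ne.
  have b0 := bnd 0; have b1 := bnd 1; rewrite /= -/d1 in b0 b1.
  have o0 := @ob N D d d1 asc (esym cyc).
  have o1 := @ob N D d1 d asc erefl.
  rewrite cyc in o1.
  have n0 := @nxt_neq N D d; have n1 := @nxt_neq N D d1; rewrite -/d1 cyc in n0 n1.
  have a0 := adj N _ b0; have a1 := adj N _ b1; rewrite -/d1 in o0 o1.
  have q := dneq N _ _ b0 b1 ne.
  case h0: (over_both D d.1).
    by exists d => //; apply: connect0.
  case h1: (over_both D d1.1).
    by exists d1 => //; apply: fconnect1.
  exfalso; rewrite h0 in o0; rewrite h1 in o1.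
  move/esym/negbT: o0; move/esym/negbT: o1; rewrite !negb_and -!leqNgt; lia.
- move: cyc uq; rewrite /orbit ord /= andbT !inE negb_or => cyc /andP[/andP[ne01 ne02] ne12].
  set d1 := kd_phi D d in cyc ne01 ne02 ne12.
  set d2 := kd_phi D d1 in cyc ne02 ne12.
  have b0 := bnd 0; have b1 := bnd 1; have b2 := bnd 2; rewrite /= -/d1 -/d2 in b0 b1 b2.
  have o0 := @ob N D d d2 asc (esym cyc).
  have o1 := @ob N D d1 d asc erefl.
  have o2 := @ob N D d2 d1 asc erefl.
  rewrite cyc in o2.
  have n0 := @nxt_neq N D d; have n1 := @nxt_neq N D d1; have n2 := @nxt_neq N D d2.
  rewrite -/d1 -/d2 cyc in n0 n1 n2.
  have a0 := adj N _ b0; have a1 := adj N _ b1; have a2 := adj N _ b2; rewrite -/d1 -/d2 in o0 o1 o2.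
  have q01 := dneq N _ _ b0 b1 ne01; have q02 := dneq N _ _ b0 b2 ne02; have q12 := dneq N _ _ b1 b2 ne12.
  case h0: (over_both D d.1).
    by exists d => //; apply: connect0.
  case h1: (over_both D d1.1).
    by exists d1 => //; apply: fconnect1.
  case h2: (over_both D d2.1).
    by exists d2 => //; apply: (@fconnect_iter _ _ 2).
  exfalso; rewrite h0 in o0; rewrite h1 in o1; rewrite h2 in o2.
  move/esym/negbT: o0; move/esym/negbT: o1; move/esym/negbT: o2.
  rewrite !negb_and -!leqNgt; lia.
Qed.
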